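(* Let $K$ be a field, let $\lambda_0,\dots,\lambda_{n+1}\in K^\times\setminus\{1\}$ with $\prod_{i=0}^{n+1}\lambda_i=1$, and let $(g_1,\dots,g_{n+1})$ be the Jordan–Pochhammer tuple in $\mathrm{GL}_n(K)$ with parameters $(\lambda_0;\lambda_1,\dots,\lambda_{n+1})$. For a nonempty subset $S=\{i_1<\dots<i_s\}\subseteq\{1,\dots,n+1\}$ with $s\le n$, let $g_S:=g_{i_1}\cdots g_{i_s}$ (ordered product) and $\lambda_S:=\prod_{i\in S}\lambda_i$. Then \[ \dim\ker(g_S-1)=n-|S|,\qquad \dim\ker(g_S-\lambda_0)=|S|-1, \] and the remaining eigenvalue of $g_S$ is $\lambda_0\lambda_S$. Moreover, if $\lambda_S\neq 1$, then $\operatorname{im}(g_S-1)$ is invariant under $g_i$ ($i\in S$), and the restriction of the tuple $(g_{i_1},\dots,g_{i_s},\lambda_0g_S^{-1})$ to $\operatorname{im}(g_S-1)$ is the Jordan–Pochhammer tuple with parameters $(\lambda_0;\lambda_{i_1},\dots,\lambda_{i_s},1/(\lambda_0\lambda_S))$.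
   Context: Given a field $K$ and $\lambda_0,\dots,\lambda_{n+1}\in K^\times\setminus\{1\}$ with $\prod_i\lambda_i=1$, a Jordan–Pochhammer tuple with parameters $(\lambda_0;\lambda_1,\dots,\lambda_{n+1})$ is a tuple $(g_1,\dots,g_{n+1})$ of elements of $\mathrm{GL}_n(K)$ with $\operatorname{rank}(g_i-1)\le 1$, $\det g_i=\lambda_0\lambda_i$ for all $i$, and $g_1g_2\cdots g_{n+1}=\lambda_0\cdot I_n$. Such a tuple exists, is unique up to simultaneous conjugation, consists of pseudoreflections and generates an irreducible subgroup (the Jordan–Pochhammer group). *)

(* Defs.v *)
From HB Require Import structures.
From mathcomp Require Import all_boot all_order all_algebra.
Set Implicit Arguments. Unset Strict Implicit. Unset Printing Implicit Defensive.
Import Order.TTheory GRing.Theory.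
Local Open Scope ring_scope.

(* Convention: matrices act on COLUMN vectors (v |-> g *m v).
   Parameters (lambda_0; lambda_1, ..., lambda_{m+1}) are a function
   lam : 'I_m.+2 -> K (lam k = lambda_k); a tuple (g_1, ..., g_{m+1}) is a
   function g : 'I_m.+1 -> 'M_m with g j = g_{j+1}, whose parameter is
   lam (lift ord0 j) = lambda_{j+1}. *)

Definition JP_params (K : fieldType) (m : nat) (lam : 'I_m.+2 -> K) : Prop :=
  (forall k, lam k != 0 /\ lam k != 1) /\ \prod_(k < m.+2) lam k = 1.

Definition JP_tuple (K : fieldType) (m : nat) (lam : 'I_m.+2 -> K)
    (g : 'I_m.+1 -> 'M[K]_m) : Prop :=
  [/\ forall j, g j \in unitmx,
      forall j, (\rank (g j - 1%:M)%R <= 1)%N,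
      forall j, \det (g j) = lam ord0 * lam (lift ord0 j)
    & \big[mulmx/1%:M]_(j < m.+1) g j = (lam ord0)%:M ].

(* g_S := g_{i_1} ... g_{i_s} for S = {i_1 < ... < i_s}
   (enum of a set of ordinals is increasing). *)
Definition gprod (K : fieldType) (m : nat) (g : 'I_m.+1 -> 'M[K]_m)
    (S : {set 'I_m.+1}) : 'M[K]_m :=
  \big[mulmx/1%:M]_(i <- enum S) g i.

Definition lamS (K : fieldType) (m : nat) (lam : 'I_m.+2 -> K)
    (S : {set 'I_m.+1}) : K :=
  \prod_(i in S) lam (lift ord0 i).

(* the parameters (lambda_0; lambda_{i_1}, ..., lambda_{i_s}, 1/(lambda_0 lambda_S)) *)
Definition restr_params (K : fieldType) (m : nat) (lam : 'I_m.+2 -> K)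
    (S : {set 'I_m.+1}) : 'I_(#|S|).+2 -> K :=
  fun k =>
    if (k : nat) == 0%N then lam ord0
    else match insub (k.-1) : option 'I_#|S| with
         | Some j => lam (lift ord0 (enum_val j))
         | None => (lam ord0 * lamS lam S)^-1
         end.
Arguments restr_params {K m} lam S k.

(* Main.v *)
Require Import Defs.
From HB Require Import structures.
From mathcomp Require Import all_boot all_order all_algebra.
From mathcomp Require Import ring zify.
Set Implicit Arguments. Unset Strict Implicit. Unset Printing Implicit Defensive.
Import Order.TTheory GRing.Theory.
Local Open Scope ring_scope.

HB.instance Definition mulmx_monoid (K : fieldType) (m : nat) :=
  Monoid.isLaw.Build 'M[K]_m 1%:M (@mulmx K m m m) (@mulmxA K m m m m)
    (@mul1mx K m m) (@mulmx1 K m m).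

Section Aux.
Variable K : fieldType.

Definition mprod n (l : seq 'M[K]_n) := \big[mulmx/1%:M]_(y <- l) y.

Lemma mprod_cons n (a : 'M[K]_n) l : mprod (a :: l) = a *m mprod l.
Proof. by rewrite /mprod big_cons. Qed.

Lemma rank_tele n (l : seq 'M[K]_n) :
  (forall y, y \in l -> (\rank (y - 1%:M)%R <= 1)%N) ->
  (\rank (mprod l - 1%:M)%R <= size l)%N.
Proof.
elim: l => [|a l IH] H; first by rewrite /mprod big_nil subrr mxrank0.
rewrite mprod_cons.
have -> : a *m mprod l - 1%:M = a *m (mprod l - 1%:M) + (a - 1%:M).
  by rewrite mulmxBr mulmx1 addrA subrK.
apply: leq_trans (mxrank_add _ _) _.
rewrite /= -addn1; apply: leq_add.
  apply: leq_trans (mxrankM_maxr _ _) _; apply: IH => y yl; apply: H.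
  by rewrite inE yl orbT.
by apply: H; rewrite inE eqxx.
Qed.

Lemma char_poly_tr n (A : 'M[K]_n) : char_poly A^T = char_poly A.
Proof.
rewrite /char_poly -det_tr; congr (\det _).
by rewrite /char_poly_mx raddfB /= tr_scalar_mx map_trmx trmxK.
Qed.

Lemma char_poly_sim p n (Q : 'M[K]_(p, n)) (A : 'M_n) (B : 'M_p) :
  p = n -> row_full Q -> Q *m A = B *m Q -> char_poly A = char_poly B.
Proof.
move=> e; case: n / e in A Q *; rewrite row_full_unit => Qu QA.
pose f := @map_mx K {poly K} (@polyC K) p p.
have key : f Q *m char_poly_mx A = char_poly_mx B *m f Q.
  rewrite /char_poly_mx mulmxBr mulmxBl -!map_mxM QA.
  by rewrite -scalar_mxC.
have dQ : \det (f Q) != 0.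
  by rewrite det_map_mx polyC_eq0 -unitfE -unitmxE.
apply: (mulIf dQ); rewrite /char_poly -!det_mulmx -key det_mulmx mulrC.
by rewrite det_mulmx.
Qed.

Lemma char_poly_lblock m k (h : 'M[K]_k) (Y : 'M_(m, k)) (D : 'M_m) :
  char_poly (block_mx h 0 Y D) = char_poly h * char_poly D.
Proof.
rewrite /char_poly -(det_lblock _ (- map_mx (@polyC K) Y)); congr (\det _).
rewrite /char_poly_mx map_block_mx /= map_mx0 (scalar_mx_block k m).
by rewrite opp_block_mx add_block_mx !oppr0 !addr0 add0r.
Qed.

Lemma char_poly_scalar m (a : K) : char_poly (a%:M : 'M_m) = ('X - a%:P) ^+ m.
Proof.
rewrite /char_poly /char_poly_mx map_scalar_mx /= -raddfB /=.
by rewrite det_scalar.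
Qed.

Lemma blk n k (A : 'M[K]_n) (V : 'M_(k, n)) (h : 'M_k) a :
  row_free V -> (A - a%:M <= V)%MS -> V *m A = h *m V ->
  char_poly A = char_poly h * ('X - a%:P) ^+ (n - k).
Proof.
move=> Vfree AV VA.
pose W := row_base (V^C)%MS.
have rW : \rank V^C = (n - k)%N by rewrite mxrank_compl (eqP Vfree).
have e : (k + \rank V^C = n)%N by rewrite rW subnKC // -(eqP Vfree) rank_leq_col.
pose Y := W *m (A - a%:M) *m pinvmx V.
have WA : W *m (A - a%:M) = Y *m V.
  by rewrite mulmxKpV // (submx_trans (submxMl _ _) AV).
rewrite -rW -(char_poly_scalar _ a) -(char_poly_lblock h Y).
apply: (@char_poly_sim _ _ (col_mx V W)) => //.
  rewrite -sub1mx -addsmxE (adds_eqmx (eqmx_refl V) (eq_row_base _)).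
  by rewrite sub1mx addsmx_compl_full.
rewrite mul_col_mx mul_block_col mul0mx addr0 VA mul_scalar_mx -WA.
by rewrite mulmxBr mul_mx_scalar subrK.
Qed.

Lemma cp_det n (A : 'M[K]_n) : (char_poly A).[0] = (-1) ^+ n * \det A.
Proof. by rewrite horner_coef0 char_poly_det. Qed.

Lemma blk_det n k (A : 'M[K]_n) (V : 'M_(k, n)) (h : 'M_k) a :
  row_free V -> (A - a%:M <= V)%MS -> V *m A = h *m V ->
  \det A = \det h * a ^+ (n - k).
Proof.
move=> Vf AV VA; have := cp_det A; rewrite (blk Vf AV VA) hornerM cp_det.
rewrite horner_exp hornerXsubC sub0r.
have kn : (k <= n)%N by rewrite -(eqP Vf) rank_leq_col.
have sg : (-1) ^+ n = (-1) ^+ k * (-1) ^+ (n - k) :> K by rewrite -exprD subnKC.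
rewrite sg => E.
have nz : (-1) ^+ k * (-1) ^+ (n - k) != 0 :> K by rewrite mulf_neq0 ?signr_eq0.
apply: (mulfI nz); rewrite mulrA -E (exprNn a) -!mulrA; congr (_ * _); by rewrite mulrCA.
Qed.

Lemma cp_small r (M : 'M[K]_r) : (r <= 1)%N ->
  exists d, char_poly M = ('X - d%:P) ^+ r.
Proof.
case: r M => [|[|r]] M // _.
  by exists 0; rewrite /char_poly det_mx00 expr0.
exists (M 0 0); rewrite /char_poly det_mx11 expr1 !mxE /=.
by rewrite mulr1n.
Qed.

Lemma rank1_cp k (h : 'M[K]_k) c : (0 < k)%N -> (\rank (h - c%:M)%R <= 1)%N ->
  exists d, char_poly h = ('X - c%:P) ^+ k.-1 * ('X - d%:P).
Proof.
move=> k0 r1.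
pose V := row_base (h - c%:M)%R.
pose h' := V *m h *m pinvmx V.
have Vh : V *m h = h' *m V.
  rewrite mulmxKpV //.
  have -> : V *m h = V *m (h - c%:M) + c *: V.
    by rewrite mulmxBr mul_mx_scalar subrK.
  rewrite addmx_sub // ?scalemx_sub //.
  by rewrite (submx_trans (submxMl _ _)) // /V eq_row_base.
have AV : (h - c%:M <= V)%MS by rewrite /V eq_row_base.
have := blk (row_base_free _) AV Vh.
have [d ->] := cp_small h' r1.
move=> ->.
case: (\rank (h - c%:M)%R) r1 => [|[|r]] // _.
  exists c; rewrite expr0 mul1r subn0 -{1}(prednK k0) exprS; ring.
exists d; rewrite expr1 subn1; ring.
Qed.

Lemma rank_lower n (l : seq 'M[K]_n) (c : K) : c != 1 -> (0 < size l)%N ->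
  (forall y, y \in l -> (\rank (y - 1%:M)%R <= 1)%N /\ (y - c%:M \in unitmx)) ->
  (n.+1 - size l <= \rank (mprod l - c%:M)%R)%N.
Proof.
case: l => [|a l] // c1 _ H.
set X := mprod (a :: l).
rewrite leqNgt; apply/negP => Hlt.
pose U := (X - 1%:M)%R.
pose Kr := kermx (X - c%:M)%R.
have rU : (\rank U <= size (a :: l))%N.
  by apply: rank_tele => y /H [].
have rK : (size (a :: l) <= \rank Kr)%N.
  rewrite mxrank_ker; have := rank_leq_col (X - c%:M)%R; lia.
have KrX : Kr *m X = c *: Kr.
  have /sub_kermxP : (Kr <= kermx (X - c%:M)%R)%MS by [].
  by rewrite mulmxBr mul_mx_scalar => /eqP; rewrite subr_eq0 => /eqP.
have c1' : c - 1 != 0 by rewrite subr_eq0.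
have KU : (Kr <= U)%MS.
  have -> : Kr = (c - 1)^-1 *: (Kr *m U).
    rewrite /U mulmxBr mulmx1 KrX -{3}(scale1r Kr) -scalerBl scalerA.
    by rewrite mulVf // scale1r.
  by rewrite scalemx_sub // submxMl.
have eqr : \rank U = \rank Kr.
  by apply/eqP; rewrite eqn_leq (leq_trans rU rK) mxrankS.
have UK : (U <= Kr)%MS by rewrite -(mxrank_leqif_sup KU).2 eqr.
have UX : U *m X = c *: U.
  move/sub_kermxP: UK; rewrite mulmxBr mul_mx_scalar => /eqP.
  by rewrite subr_eq0 => /eqP.
have E : U *m a *m (mprod l - 1%:M) = - (U *m (a - c%:M)).
  rewrite mulmxBr mulmx1 -mulmxA -mprod_cons -/X UX mulmxBr mul_mx_scalar.
  by rewrite opprB.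
have [_ au] := H a (mem_head _ _).
have r1 : \rank (U *m a *m (mprod l - 1%:M)) = \rank U.
  by rewrite E mxrank_opp mxrankMfree // row_free_unit.
have r2 : (\rank (mprod l - 1%:M)%R <= size l)%N.
  by apply: rank_tele => y yl; have [] := H y; rewrite ?inE ?yl ?orbT.
have := mxrankM_maxr (U *m a) (mprod l - 1%:M)%R.
rewrite r1 eqr => r3.
have := leq_trans r3 r2; move: rK => /=; lia.
Qed.

Lemma rank_conj n (z M : 'M[K]_n) : z \in unitmx ->
  \rank (invmx z *m M *m z) = \rank M.
Proof.
move=> zu; rewrite mxrankMfree ?row_free_unit //.
by rewrite (eqmxMfull _ _) // row_full_unit unitmx_inv.
Qed.

Definition goodP n (c : K) (y : 'M[K]_n) :=
  (\rank (y - 1%:M)%R <= 1)%N && (y - c%:M \in unitmx).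

Lemma goodP_conj n c (y z : 'M[K]_n) : goodP c y -> z \in unitmx ->
  goodP c (invmx z *m y *m z).
Proof.
move=> /andP[r1 u] zu; apply/andP; split.
  have -> : (invmx z *m y *m z - 1%:M = invmx z *m (y - 1%:M) *m z)%R.
    by rewrite mulmxBr mulmxBl mulmx1 mulVmx.
  by rewrite rank_conj.
have -> : (invmx z *m y *m z - c%:M = invmx z *m (y - c%:M) *m z)%R.
  by rewrite mulmxBr mulmxBl mul_mx_scalar -scalemxAl mulVmx // scalemx1.
by rewrite !unitmx_mul unitmx_inv zu u.
Qed.

Lemma prod_unit n (I : Type) (r : seq I) (p : pred I) (g : I -> 'M[K]_n) :
  (forall i, g i \in unitmx) -> \big[mulmx/1%:M]_(i <- r | p i) g i \in unitmx.
Proof.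
move=> gu; apply: (big_ind (fun x => x \in unitmx)) => //.
  exact: unitmx1.
by move=> x y xu yu; rewrite unitmx_mul xu yu.
Qed.

Lemma decomp n (I : Type) (g : I -> 'M[K]_n) c (r : seq I) (p : pred I) :
  (forall i, g i \in unitmx) -> (forall i, goodP c (g i)) ->
  exists cs : seq 'M_n, [/\ size cs = count (predC p) r, all (goodP c) cs
   & \big[mulmx/1%:M]_(i <- r) g i = \big[mulmx/1%:M]_(i <- r | p i) g i *m mprod cs].
Proof.
move=> gu gg; elim: r => [|a r [cs [sz al E]]].
  by exists [::]; rewrite !big_nil /mprod big_nil mulmx1.
rewrite !big_cons E.
case: (boolP (p a)) => pa /=.
  by exists cs; rewrite pa /= add0n mulmxA.
set F := \big[mulmx/1%:M]_(i <- r | p i) g i.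
have Fu : F \in unitmx by apply: prod_unit.
exists (invmx F *m g a *m F :: cs); split => /=.
- by rewrite sz pa.
- by rewrite al andbT goodP_conj.
by rewrite mprod_cons !mulmxA mulmxV // mul1mx.
Qed.

Lemma sub_tele n (l : seq 'M[K]_n) (U : 'M_n) :
  (forall y, y \in l -> ((y - 1%:M)^T <= U)%MS) -> ((mprod l - 1%:M)^T <= U)%MS.
Proof.
elim: l => [|a l IH] H; first by rewrite /mprod big_nil subrr trmx0 sub0mx.
rewrite mprod_cons.
have -> : a *m mprod l - 1%:M = a *m (mprod l - 1%:M) + (a - 1%:M).
  by rewrite mulmxBr mulmx1 addrA subrK.
have Ha : ((a - 1%:M)^T <= U)%MS by apply: H; rewrite inE eqxx.
have Hl : ((mprod l - 1%:M)^T <= U)%MS.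
  by apply: IH => y yl; apply: H; rewrite inE yl orbT.
rewrite raddfD /= trmx_mul addmx_sub //.
have -> : a^T = 1%:M + (a - 1%:M)^T by rewrite raddfB /= trmx1 addrC subrK.
rewrite mulmxDr mulmx1 addmx_sub //.
exact: submx_trans (submxMl _ _) Ha.
Qed.

Lemma stab n k (V : 'M[K]_(k, n)) (A : 'M_n) a : (A - a%:M <= V)%MS ->
  V *m A = (V *m A *m pinvmx V) *m V.
Proof.
move=> AV; rewrite mulmxKpV //.
have -> : V *m A = V *m (A - a%:M) + a *: V.
  by rewrite mulmxBr mul_mx_scalar subrK.
by rewrite addmx_sub // ?scalemx_sub // (submx_trans (submxMl _ _) AV).
Qed.

Lemma cp_form_det n (A : 'M[K]_n) a d : (0 < n)%N ->
  char_poly A = ('X - a%:P) ^+ n.-1 * ('X - d%:P) -> \det A = a ^+ n.-1 * d.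
Proof.
move=> n0 E; have := cp_det A; rewrite E hornerM horner_exp !hornerXsubC !sub0r.
have sg : (-1) ^+ n = (-1) ^+ n.-1 * (-1) :> K by rewrite -exprSr prednK.
rewrite sg (exprNn a) => H.
have nz : (-1) ^+ n.-1 * (-1) != 0 :> K by rewrite mulf_neq0 ?signr_eq0 ?oppr_eq0 ?oner_eq0.
apply: (mulfI nz); rewrite -H; ring.
Qed.

Lemma fact1 n (G : 'M[K]_n) (c mu : K) : (0 < n)%N -> c != 1 -> mu != 1 -> c != 0 ->
  (\rank (G - 1%:M)%R <= 1)%N -> \det G = c * mu -> (G - c%:M \in unitmx).
Proof.
move=> n0 c1 mu1 c0 r1 dG.
have [d E] := rank1_cp n0 r1.
have := cp_form_det n0 E; rewrite expr1n mul1r dG => dE.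
apply/negPn/negP => nu.
have : eigenvalue G c.
  by rewrite /eigenvalue /eigenspace kermx_eq0 row_free_unit.
rewrite eigenvalue_root_char /root E hornerM horner_exp !hornerXsubC.
rewrite mulf_eq0 expf_eq0 !subr_eq0 (negPf c1) andbF /= -dE => /eqP H.
by move: mu1; rewrite -(mulfI c0 (etrans (mulr1 c) H)) eqxx.
Qed.

Lemma reindexS n m (S : {set 'I_n.+1}) (f : 'I_n.+1 -> 'M[K]_m) :
  \big[mulmx/1%:M]_(i <- enum S) f i = \big[mulmx/1%:M]_(j < #|S|) f (enum_val j).
Proof.
rewrite (big_nth ord0) -cardE big_mkord; apply: eq_bigr => j _.
by rewrite (enum_val_nth ord0).
Qed.

Lemma prod_rel n k (I : eqType) (r : seq I) (G : I -> 'M[K]_n) (H : I -> 'M[K]_k)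
   (B : 'M_(n, k)) :
  (forall x, x \in r -> G x *m B = B *m H x) ->
  \big[mulmx/1%:M]_(x <- r) G x *m B = B *m \big[mulmx/1%:M]_(x <- r) H x.
Proof.
elim: r => [|a r IH] E; first by rewrite !big_nil mul1mx mulmx1.
rewrite !big_cons -mulmxA IH; last by move=> x xr; apply: E; rewrite inE xr orbT.
by rewrite !mulmxA E // inE eqxx.
Qed.

Lemma ker_sub n (A : 'M[K]_n) c : c != 1 ->
  (kermx (A - c%:M)%R <= (A - 1%:M)%R)%MS.
Proof.
move=> c1; set Kr := kermx _.
have KrX : Kr *m A = c *: Kr.
  have /sub_kermxP : (Kr <= kermx (A - c%:M)%R)%MS by [].
  by rewrite mulmxBr mul_mx_scalar => /eqP; rewrite subr_eq0 => /eqP.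
have c1' : c - 1 != 0 by rewrite subr_eq0.
have -> : Kr = (c - 1)^-1 *: (Kr *m (A - 1%:M)).
  rewrite mulmxBr mulmx1 KrX -{3}(scale1r Kr) -scalerBl scalerA.
  by rewrite mulVf // scale1r.
by rewrite scalemx_sub // submxMl.
Qed.

Lemma trB n (M : 'M[K]_n) c : (M - c%:M)^T = M^T - c%:M.
Proof. by rewrite raddfB /= tr_scalar_mx. Qed.
End Aux.

Theorem mainTheorem4 (K : fieldType) (n : nat) (lam : 'I_n.+2 -> K)
    (g : 'I_n.+1 -> 'M[K]_n) (S : {set 'I_n.+1}) :
  JP_params lam -> JP_tuple lam g ->
  S != set0 -> (#|S| <= n)%N ->
  [/\ \rank (kermx (gprod g S - 1%:M)^T) = (n - #|S|)%N,
      \rank (kermx (gprod g S - (lam ord0)%:M)^T) = (#|S| - 1)%N,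
      char_poly (gprod g S)
        = ('X - 1) ^+ (n - #|S|) * ('X - (lam ord0)%:P) ^+ (#|S| - 1)
          * ('X - (lam ord0 * lamS lam S)%:P)
    & lamS lam S != 1 ->
      (forall i, i \in S ->
         ((g i *m (gprod g S - 1%:M))^T <= (gprod g S - 1%:M)^T)%MS)
      /\ exists (B : 'M[K]_(n, #|S|)) (h : 'I_(#|S|).+1 -> 'M[K]_(#|S|)),
           [/\ \rank B = #|S|,
               (B^T == (gprod g S - 1%:M)^T)%MS,
               forall j : 'I_#|S|, g (enum_val j) *m B = B *m h (widen_ord (leqnSn _) j),
               (lam ord0 *: invmx (gprod g S)) *m B = B *m h ord_max
             & JP_tuple (restr_params lam S) h ] ].
Proof.
move=> [lamP prod1] [gu rk dt gall] Sne Sle.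
have s0 : (0 < #|S|)%N by rewrite card_gt0.
have n0 : (0 < n)%N by apply: leq_trans s0 Sle.
set s := #|S| in s0 Sle *.
set l0 := lam ord0.
have [l0nz l01] := lamP ord0.
have good : forall j, goodP l0 (g j).
  move=> j; apply/andP; split => //; apply: (fact1 n0 l01 (proj2 (lamP (lift ord0 j))) l0nz) => //.
set gS := gprod g S.
have gSE : gS = mprod (map g (enum S)) by rewrite /gS /gprod /mprod big_map.
have szS : size (map g (enum S)) = s by rewrite size_map -cardE.
have gsE : gS = \big[mulmx/1%:M]_(i <- index_enum 'I_n.+1 | i \in S) g i.
  by rewrite /gS /gprod -deprecated_filter_index_enum big_filter.
have gSu : gS \in unitmx by rewrite gsE prod_unit.
have [cs [szc alc E]] := decomp (index_enum 'I_n.+1) (fun i => i \in S) gu good.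
have szc' : size cs = (n.+1 - s)%N.
  have c1 : count (fun i => i \in S) (index_enum 'I_n.+1) = s.
    by rewrite /s cardE -deprecated_filter_index_enum size_filter.
  have c2 : size (index_enum 'I_n.+1) = n.+1.
    by rewrite [index_enum _]unlock -enumT size_enum_ord.
  rewrite szc; have := count_predC (fun i => i \in S) (index_enum 'I_n.+1).
  rewrite c1 c2; lia.
set C := mprod cs.
have E' : gS *m C = l0%:M by rewrite gsE -E -gall.
have gSunit : row_full gS by rewrite row_full_unit.
have r1 : \rank (gS - 1%:M)%R = s.
  apply/eqP; rewrite eqn_leq; apply/andP; split.
    rewrite gSE -szS; apply: rank_tele => y /mapP [i _ ->]; by case/andP: (good i).
  have -> : (gS - 1%:M = - l0^-1 *: (gS *m (C - l0%:M)))%R.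
    rewrite mulmxBr E' mul_mx_scalar scalerBr scalerA scale_scalar_mx mulNr mulVf //.
    by rewrite scaleN1r opprK addrC raddfN.
  rewrite mxrank_scale_nz ?oppr_eq0 ?invr_eq0 // (eqmxMfull _ gSunit).
  have H : (n.+1 - size cs <= \rank (C - l0%:M)%R)%N.
    apply: rank_lower l01 _ _; first by rewrite szc'; lia.
    by move=> y yc; have /andP[] := allP alc y yc.
  rewrite szc' in H; apply: leq_trans H; lia.
have r2 : \rank (gS - l0%:M)%R = (n.+1 - s)%N.
  apply/eqP; rewrite eqn_leq; apply/andP; split.
    have -> : (gS - l0%:M = - (gS *m (C - 1%:M)))%R.
      by rewrite mulmxBr E' mulmx1 opprB.
    rewrite mxrank_opp (eqmxMfull _ gSunit) -szc'.
    by apply: rank_tele => y yc; have /andP[] := allP alc y yc.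
  have H : (n.+1 - size (map g (enum S)) <= \rank (mprod (map g (enum S)) - l0%:M)%R)%N.
    apply: rank_lower l01 _ _; first by rewrite szS.
    by move=> y /mapP [i _ ->]; have /andP[] := good i.
  by rewrite -gSE szS in H.
have p1 : \rank (kermx (gS - 1%:M)^T) = (n - s)%N by rewrite mxrank_ker mxrank_tr r1.
have p2 : \rank (kermx (gS - l0%:M)^T) = (s - 1)%N.
  by rewrite mxrank_ker mxrank_tr r2; lia.
pose U := (\sum_(i in S) (g i - 1%:M)^T)%MS.
have gsU : ((gS - 1%:M)^T <= U)%MS.
  rewrite gSE; apply: sub_tele => y /mapP [i iS ->]; rewrite mem_enum in iS.
  by apply: (sumsmx_sup i).
have rU : (\rank U <= s)%N.
  rewrite /U /s -sum1_card.
  apply: (big_ind2 (fun (M : 'M[K]_n) (k : nat) => \rank M <= k)%N).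
  - by rewrite mxrank0.
  - move=> A1 k1 A2 k2 h1 h2; apply: leq_trans (mxrank_adds_leqif _ _).1 _.
    exact: leq_add.
  - by move=> i _; rewrite mxrank_tr rk.
have er : \rank (gS - 1%:M)^T = s by rewrite mxrank_tr r1.
have UgS : (U <= (gS - 1%:M)^T)%MS.
  rewrite -(mxrank_leqif_sup gsU).2 er eqn_leq rU /=.
  by rewrite -er mxrankS.
have subS : forall i, i \in S -> ((g i - 1%:M)^T <= (gS - 1%:M)^T)%MS.
  by move=> i iS; apply: submx_trans UgS; apply: (sumsmx_sup i).
pose V : 'M_(s, n) := castmx (er, erefl) (row_base (gS - 1%:M)^T).
have Vfree : row_free V by rewrite row_free_castmx row_base_free.
have VU : (V :=: (gS - 1%:M)^T)%MS by apply: eqmx_trans (eqmx_cast _ _) (eq_row_base _).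
have rV : \rank V = s by rewrite (eqP Vfree).
have AV : (gS^T - 1%:M <= V)%MS by rewrite -trB VU submx_refl.
pose F (i : 'I_n.+1) := (V *m (g i)^T *m pinvmx V)^T.
have FR : forall i, i \in S -> g i *m V^T = V^T *m F i.
  move=> i iS; apply: trmx_inj; rewrite !trmx_mul !trmxK.
  by apply: (@stab _ _ _ _ _ 1); rewrite -trB VU subS.
pose hS := \big[mulmx/1%:M]_(j < s) F (enum_val j).
have hSR : gS *m V^T = V^T *m hS.
  rewrite /gS /gprod reindexS /hS; apply: prod_rel => j _; apply: FR; exact: enum_valP.
have VA : V *m gS^T = hS^T *m V by apply: trmx_inj; rewrite !trmx_mul !trmxK hSR.
have cpA := blk Vfree AV VA.
have dA := blk_det Vfree AV VA.
have dgS : \det gS = l0 ^+ s * lamS lam S.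
  rewrite /gS /gprod (big_morph _ (@det_mulmx _ _) (det1 _ _)).
  under eq_bigr do rewrite dt.
  by rewrite big_enum /= big_split prodr_const.
have rhS : (\rank (hS^T - l0%:M)%R <= 1)%N.
  have e1 : (hS^T - l0%:M) *m V = V *m (gS^T - l0%:M).
    by rewrite mulmxBl mulmxBr -VA mul_scalar_mx mul_mx_scalar.
  rewrite -(mxrankMfree _ Vfree) e1.
  have KV : (kermx (gS^T - l0%:M)%R <= V)%MS by apply: submx_trans (ker_sub _ l01) AV.
  have := mxrank_mul_ker V (gS^T - l0%:M)%R.
  rewrite (capmx_idPr KV) mxrank_ker -trB mxrank_tr r2 rV; lia.
have [d cphS] := rank1_cp s0 rhS.
have ddet := cp_form_det s0 cphS.
have dE : d = l0 * lamS lam S.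
  move: dA; rewrite det_tr dgS ddet expr1n mulr1.
  have sg : l0 ^+ s = l0 ^+ s.-1 * l0 by rewrite -exprSr prednK.
  by rewrite sg -mulrA => /(mulfI (expf_neq0 _ l0nz)).
split => //.
  by rewrite -char_poly_tr cpA cphS dE subn1 polyC1 mulrC mulrA.
move=> lS1; split.
  move=> i iS; rewrite trmx_mul.
  have -> : (g i)^T = 1%:M + (g i - 1%:M)^T by rewrite raddfB /= trmx1 addrC subrK.
  by rewrite mulmxDr mulmx1 addmx_sub // (submx_trans (submxMl _ _) (subS i iS)).
have VAi : forall i, i \in S -> V *m (g i)^T = (F i)^T *m V.
  by move=> i iS; rewrite trmxK; apply: (@stab _ _ _ _ _ 1); rewrite -trB VU subS.
have AVi : forall i, i \in S -> ((g i)^T - 1%:M <= V)%MS.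
  by move=> i iS; rewrite -trB VU subS.
have dF : forall i, i \in S -> \det (F i) = \det (g i).
  move=> i iS; rewrite -det_tr -(det_tr (g i)).
  by rewrite (blk_det Vfree (AVi i iS) (VAi i iS)) expr1n mulr1.
have dhS : \det hS = l0 ^+ s * lamS lam S.
  by rewrite -det_tr -dgS -(det_tr gS) dA expr1n mulr1.
have lSnz : lamS lam S != 0.
  by apply/prodf_neq0 => i _; have [] := lamP (lift ord0 i).
have hSu : hS \in unitmx by rewrite unitmxE unitfE dhS mulf_neq0 ?expf_neq0.
have gShS : invmx gS *m V^T = V^T *m invmx hS.
  have e2 : gS *m (V^T *m invmx hS) = V^T by rewrite mulmxA hSR -mulmxA mulmxV // mulmx1.
  by rewrite -{1}e2 mulKmx.
pose hl := l0 *: invmx hS.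
pose h (k : 'I_s.+1) := if (insub (val k) : option 'I_s) is Some j then F (enum_val j) else hl.
have hw : forall j : 'I_s, h (widen_ord (leqnSn s) j) = F (enum_val j).
  by move=> j; rewrite /h /= valK.
have hm : h ord_max = hl by rewrite /h /= insubN // ltnn.
exists V^T, h; split.
- by rewrite mxrank_tr rV.
- by rewrite trmxK; apply/eqmxP; exact: VU.
- by move=> j; rewrite hw FR // enum_valP.
- by rewrite hm /hl -scalemxAl -scalemxAr gShS.
have hdet : forall k : 'I_s.+1,
    \det (h k) = restr_params lam S ord0 * restr_params lam S (lift ord0 k).
  move=> k; rewrite /restr_params lift0 /= /h.
  case: insubP => [j _ vj | nj].
    by rewrite dF ?enum_valP // dt.
  rewrite /hl detZ det_inv dhS !invfM mulrA mulfV ?expf_neq0 // mul1r.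
  by rewrite mulrA mulfV // mul1r.
have hnz : forall k : 'I_s.+1, \det (h k) != 0.
  move=> k; rewrite hdet /restr_params lift0 /=.
  case: insubP => [j _ vj | nj]; rewrite mulf_neq0 //.
    by have [] := lamP (lift ord0 (enum_val j)).
  by rewrite invr_neq0 // mulf_neq0.
split.
- by move=> k; rewrite unitmxE unitfE hnz.
- move=> k; rewrite /h; case: insubP => [j _ _ | _].
    have jS := enum_valP j.
    rewrite -mxrank_tr trB -(mxrankMfree _ Vfree) mulmxBl -VAi // mul1mx.
    rewrite -{2}[V]mulmx1 -mulmxBr.
    apply: leq_trans (mxrankM_maxr _ _) _.
    by rewrite -trB mxrank_tr rk.
  have -> : (hl - 1%:M = (l0%:M - hS) *m invmx hS)%R.
    by rewrite mulmxBl mul_scalar_mx mulmxV.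
  apply: leq_trans (mxrankM_maxl _ _) _.
  by rewrite -mxrank_opp opprB -mxrank_tr trB.
- exact: hdet.
rewrite (big_ord_recr s) /=.
under eq_bigr do rewrite hw.
by rewrite hm /hl -scalemxAr mulmxV // scalemx1.
Qed.
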